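(* Let $(M,\mathbf g)$ be a $(d+1)$-dimensional spacetime with metric $$\mathbf g=g_{tt}(r)\,\mathbf dt^2+g_{rr}(r)\,\mathbf dr^2+r^2\{\mathbf d\theta^2+s(\theta)^2\mathbf d\Omega_{(d-2)}^2\},$$ where $g_{tt}<0$ and $g_{rr}>0$ are smooth, $\mathbf d\Omega_{(d-2)}^2$ is the metric of the unit $(d-2)$-sphere, and $s(\theta)=\sin\theta$, $\theta$, or $\sinh\theta$. Let $S=\{r=r_p\}$, a timelike hypersurface, let $p\in S$, and let $\boldsymbol\sigma_{\boldsymbol\chi}$ be the trace-free part of the second fundamental form of $S$. Then for any nonzero vectors $\mathbf X,\mathbf Y\in T_pS$: $\boldsymbol\sigma_{\boldsymbol\chi}(\mathbf X,\mathbf X)=0$ iff $\boldsymbol\sigma_{\boldsymbol\chi}(\mathbf Y,\mathbf Y)=0$; $\boldsymbol\sigma_{\boldsymbol\chi}(\mathbf X,\mathbf X)>0$ iff $\boldsymbol\sigma_{\boldsymbol\chi}(\mathbf Y,\mathbf Y)>0$; and $\boldsymbol\sigma_{\boldsymbol\chi}(\mathbf X,\mathbf X)<0$ iff $\boldsymbol\sigma_{\boldsymbol\chi}(\mathbf Y,\mathbf Y)<0$.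
   Context: For a hypersurface $S$ with unit normal $\bar{\mathbf m}$ and induced metric $\mathbf h$, the second fundamental form is $\boldsymbol\chi(X,Y)=\mathbf g(\nabla_X\bar{\mathbf m},Y)$ for $X,Y$ tangent to $S$; the mean curvature is $H=\frac1d\mathrm{tr}_{\mathbf h}\boldsymbol\chi$ and the trace-free part is $\boldsymbol\sigma_{\boldsymbol\chi}=\boldsymbol\chi-H\mathbf h$. *)

(* Defs.v *)
From HB Require Import structures.
From mathcomp Require Import all_boot all_order all_algebra.
From mathcomp Require Import all_classical all_reals all_analysis.

Set Implicit Arguments.
Unset Strict Implicit.
Unset Printing Implicit Defensive.

Import Order.TTheory GRing.Theory Num.Theory.
Import numFieldNormedType.Exports.
Local Open Scope ring_scope.

Definition sinhR (R : realType) (x : R) : R := (expR x - expR (- x)) / 2.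

Definition smooth_fun (R : realType) (f : R -> R) : Prop :=
  forall (n : nat) (x : R), derivable (derive1n n f) x 1.

Definition coord_vec (R : realType) (n : nat) (k : 'I_n) : 'rV[R]_n :=
  delta_mx 0 k.
Arguments coord_vec {R n}.

Definition dmetric (R : realType) (n : nat) (G : 'rV[R]_n -> 'M[R]_n)
    (k : 'I_n) (x : 'rV[R]_n) (i j : 'I_n) : R :=
  derive (fun y => G y i j) x (coord_vec k).

Definition christoffel (R : realType) (n : nat) (G : 'rV[R]_n -> 'M[R]_n)
    (x : 'rV[R]_n) (mu nu la : 'I_n) : R :=
  2^-1 * \sum_(sg < n) (invmx (G x)) mu sg *
     (dmetric G nu x sg la + dmetric G la x sg nu - dmetric G sg x nu la).

Definition gprod (R : realType) (n : nat) (G : 'rV[R]_n -> 'M[R]_n)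
    (x : 'rV[R]_n) (U W : 'rV[R]_n) : R :=
  \sum_(i < n) \sum_(j < n) U 0 i * G x i j * W 0 j.

Definition covD (R : realType) (n : nat) (G : 'rV[R]_n -> 'M[R]_n)
    (V : 'rV[R]_n -> 'rV[R]_n) (x X : 'rV[R]_n) : 'rV[R]_n :=
  derive V x X +
  \row_mu \sum_(nu < n) \sum_(la < n) christoffel G x mu nu la * X 0 nu * V x 0 la.

(** Unit normal field to the level hypersurfaces {x_k = const}:
    the g-gradient of the coordinate x_k, normalised (g(m,m) = 1). *)
Definition level_normal (R : realType) (n : nat) (G : 'rV[R]_n -> 'M[R]_n)
    (k : 'I_n) (x : 'rV[R]_n) : 'rV[R]_n :=
  (Num.sqrt ((invmx (G x)) k k))^-1 *: \row_mu (invmx (G x)) mu k.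

Definition tangent_level (R : realType) (n : nat) (k : 'I_n) (X : 'rV[R]_n) :=
  X 0 k = 0.
Arguments tangent_level {R n}.

Definition sff (R : realType) (n : nat) (G : 'rV[R]_n -> 'M[R]_n)
    (k : 'I_n) (p X Y : 'rV[R]_n) : R :=
  gprod G p (covD G (level_normal G k) p X) Y.

(** Mean curvature H = (1/d) tr_h chi of the d-dimensional hypersurface
    {x_k = x_k(p)} in a (d+1)-dimensional chart, computed in the coordinate
    basis (d_a)_{a <> k} of T_pS, where h_{ab} = g(d_a, d_b). *)
Definition mean_curv (R : realType) (d : nat) (G : 'rV[R]_d.+1 -> 'M[R]_d.+1)
    (k : 'I_d.+1) (p : 'rV[R]_d.+1) : R :=
  (d%:R)^-1 *
  \tr (invmx (\matrix_(a < d, b < d) G p (lift k a) (lift k b)) *m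
       \matrix_(a < d, b < d) sff G k p (coord_vec (lift k a)) (coord_vec (lift k b))).

Definition tf_sff (R : realType) (d : nat) (G : 'rV[R]_d.+1 -> 'M[R]_d.+1)
    (k : 'I_d.+1) (p X Y : 'rV[R]_d.+1) : R :=
  sff G k p X Y - mean_curv G k p * gprod G p X Y.

(** * The spacetime metric in coordinates
    x = (t, r, theta, phi_1, ..., phi_{d-2}) (indices 0,1,2,3..d):
    g = g_tt(r) dt^2 + g_rr(r) dr^2
        + r^2 (dtheta^2 + s(theta)^2 dOmega_{d-2}^2),
    with dOmega_{d-2}^2 = dphi_1^2 + sin^2 phi_1 dphi_2^2 + ...
    the round unit (d-2)-sphere metric in standard spherical coordinates. *)
Definition warped_entry (R : realType) (d : nat) (gtt grr s : R -> R)
    (x : 'rV[R]_d.+1) (i : 'I_d.+1) : R :=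
  let r := x 0 (inord 1) in
  let th := x 0 (inord 2) in
  if (i == 0%N :> nat) then gtt r
  else if (i == 1%N :> nat) then grr r
  else if (i == 2%N :> nat) then r ^+ 2
  else r ^+ 2 * s th ^+ 2 * \prod_(3 <= j < i) (sin (x 0 (inord j))) ^+ 2.

Definition warped_metric (R : realType) (d : nat) (gtt grr s : R -> R)
    (x : 'rV[R]_d.+1) : 'M[R]_d.+1 :=
  \matrix_(i, j) (if i == j then warped_entry gtt grr s x i else 0).

(* Main.v *)
Require Import Defs.
From HB Require Import structures.
From mathcomp Require Import all_boot all_order all_algebra.
From mathcomp Require Import all_classical all_reals all_analysis.
From mathcomp Require Import ring lra zify.
Import Order.TTheory GRing.Theory Num.Theory.
Import numFieldNormedType.Exports.
Local Open Scope ring_scope.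

Lemma sum_if (R : realType) n (F : 'I_n -> R) i :
  \sum_(j < n) (if i == j then F j else 0) = F i.
Proof.
rewrite (bigD1 i) //= eqxx big1 ?addr0 // => j.
by rewrite eq_sym => /negbTE ->.
Qed.

Lemma invmx_diagE (R : realType) n (e : 'I_n -> R) : (forall i, e i != 0) ->
  invmx (\matrix_(i, j) (if i == j then e i else 0)) =
  \matrix_(i, j) (if i == j then (e i)^-1 else 0).
Proof.
move=> e0; set D := \matrix_(i, j) _; set D' := \matrix_(i, j) _.
have DD : D *m D' = 1%:M.
  apply/matrixP => i j; rewrite !mxE.
  rewrite (eq_bigr (fun l => if i == l then (if i == j then 1 else 0) else 0)).
    by rewrite sum_if; case: eqP.
  move=> l _; rewrite !mxE; case: eqP => [<-|]; last by rewrite mul0r.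
  by case: eqP => _; rewrite ?mulr0 ?mulfV.
have [uD _] := mulmx1_unit DD.
by rewrite -[RHS](mulKmx uD D') DD mulmx1.
Qed.

Lemma derive_const_line (R : realType) (V : normedModType R) (f : V -> R^o) a v :
  (forall h : R, f (h *: v + a) = f a) -> derive f a v = 0.
Proof.
move=> H; rewrite /derive.
have -> : (fun h : R => h^-1 *: ((f \o shift a) (h *: v) - f a)) = fun _ => 0.
  by apply: funext => h; rewrite /= H subrr scaler0.
exact: lim_cst.
Qed.

Lemma derive_line (R : realType) (V : normedModType R) (f : V -> R^o) a v :
  derive f a v = derive (fun h : R => f (h *: v + a)) 0 1.
Proof.
rewrite /derive /= scale0r add0r.
suff -> : (fun h0 : R => h0^-1 *: (f ((h0%:A + 0) *: v + a) - f a)) =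
  (fun h0 : R => h0^-1 *: (f (h0 *: v + a) - f a)) by [].
by apply: funext => h /=; rewrite addr0 [h%:A]mulr1.
Qed.

Lemma derive_sq_line (R : realType) (V : normedModType R) (f : V -> R^o) a v (r C : R) :
  (forall h : R, f (h *: v + a) = (h + r)^+2 * C) -> derive f a v = 2 * r * C.
Proof.
move=> H; rewrite derive_line.
have -> : (fun h : R => f (h *: v + a)) = (fun h : R => (h + r)^+2 * C : R^o).
  by apply: funext => h; rewrite H.
have D : is_derive (0:R) (1:R) (fun x : R => (x + r)^+2 * C : R^o) (2 * r * C).
  apply: is_derive_eq.
  rewrite !(add0r, addr0, scaler0, scaler1).
  change (C * (r + r) = 2 * r * C :> R); ring.
exact: (@derive_val _ _ _ _ _ _ _ D).
Qed.

Lemma derive_near_const (R : realType) (V W : normedModType R) (f : V -> W) a v :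
  (\forall h \near (0:R), f (h *: v + a) = f a) -> derive f a v = 0.
Proof.
move=> H; rewrite /derive; apply: (cvg_lim (@norm_hausdorff _ W)).
have c0 : ((fun _ : R => (0:W)) @ 0^' --> (0:W))%classic by apply: cvg_cst.
apply: cvg_trans c0; apply: near_eq_cvg.
have H' := nbhs_dnbhs H.
apply: filterS H' => h /= ->; by rewrite subrr scaler0.
Qed.

Lemma near_neq0_affine (R : realType) (g : R -> R) (X c : R) :
  continuous g -> g c != 0 -> \forall h \near (0:R), g (h * X + c) != 0.
Proof.
move=> cg gc.
have cv : (g (h * X + c) @[h --> (0:R)] --> g c)%classic.
  have -> : g c = g (0 * X + c) by rewrite mul0r add0r.
  apply: (@continuous_comp _ _ _ (fun h : R => h * X + c) g 0); last exact: cg.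
  apply: cvgD; last exact: cvg_cst.
  apply: cvgMl; exact: cvg_id.
exact: cvgr_neq0 cv gc.
Qed.

Lemma cont_s (R : realType) (s : R -> R) :
  s = sin \/ s = id \/ s = @sinhR R -> continuous s.
Proof.
case=> [->|[->|->]]; first exact: continuous_sin.
  by move=> x; exact: cvg_id.
have -> : @sinhR R = fun x => (expR x - expR (- x)) * 2^-1 by [].
move=> x; apply: cvgM; last exact: cvg_cst.
apply: cvgB; first exact: continuous_expR.
apply: (@continuous_comp _ _ _ (fun y : R => - y) expR x); last exact: continuous_expR.
apply: cvgN; exact: cvg_id.
Qed.

Lemma sqr_pos (R : realType) (x : R) : x != 0 -> 0 < x ^+ 2.
Proof. by move=> x0; rewrite lt0r sqr_ge0 sqrf_eq0 x0. Qed.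

Theorem lemma1 (R : realType) (d : nat) (hd : (2 <= d)%N)
    (gtt grr s : R -> R)
    (gtt_smooth : smooth_fun gtt) (grr_smooth : smooth_fun grr)
    (gtt_neg : forall r, gtt r < 0) (grr_pos : forall r, 0 < grr r)
    (hs : s = sin \/ s = id \/ s = @sinhR R)
    (rp : R) (p : 'rV[R]_d.+1)
    (hrp : 0 < rp) (p_on_S : p 0 (inord 1) = rp)
    (p_chart : s (p 0 (inord 2)) != 0 /\
               forall j : nat, (3 <= j < d)%N -> sin (p 0 (inord j)) != 0) :
  let G := @warped_metric R d gtt grr s in
  let sigma := tf_sff G (inord 1) p in
  forall X Y : 'rV[R]_d.+1,
    tangent_level (inord 1) X -> tangent_level (inord 1) Y ->
    X != 0 -> Y != 0 ->
    [/\ sigma X X = 0 <-> sigma Y Y = 0,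
        0 < sigma X X <-> 0 < sigma Y Y
      & sigma X X < 0 <-> sigma Y Y < 0].
Proof.
destruct d as [|[|n]]; [done|done|].
move=> G sigma X Y tX tY X0 Y0.
rewrite /sigma /tf_sff /tangent_level in tX tY *.
set k : 'I_n.+3 := inord 1 in p_on_S tX tY *.
have kE : (k : nat) = 1%N by rewrite /k inordK.
pose e (y : 'rV[R]_n.+3) (i : 'I_n.+3) := warped_entry gtt grr s y i.
have GE : forall y i j, G y i j = if i == j then e y i else 0.
  by move=> y i j; rewrite /G /warped_metric mxE.
have e0E : forall y, e y ord0 = gtt (y 0 k) by [].
have ekE : forall y, e y k = grr (y 0 k).
  by move=> y; rewrite /e /warped_entry kE.
have e2E : forall y (i : 'I_n.+3), (i : nat) = 2%N -> e y i = y 0 k ^+ 2.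
  by move=> y [[|[|[|i]]] Hi] //=.
have e3E : forall y (i : 'I_n.+3), (3 <= i)%N -> e y i =
    y 0 k ^+ 2 * s (y 0 (inord 2)) ^+ 2 * \prod_(3 <= j < i) sin (y 0 (inord j)) ^+ 2.
  by move=> y [[|[|[|i]]] Hi] //= _.
have yE : forall h (Z : 'rV[R]_n.+3) j, (h *: Z + p) 0 j = h * Z 0 j + p 0 j.
  by move=> h Z j; rewrite !mxE.
have cvE : forall nu j : 'I_n.+3, @coord_vec R n.+3 nu 0 j = (j == nu)%:R.
  by move=> nu j; rewrite /coord_vec mxE eqxx.
have rp0 : rp != 0 by rewrite gt_eqF.
have goodP : forall y : 'rV[R]_n.+3, y 0 k = rp -> s (y 0 (inord 2)) != 0 ->
    (forall j : 'I_n.+3, (3 <= j < n.+2)%N -> sin (y 0 j) != 0) ->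
    forall i, e y i != 0.
  move=> y yk sy sj [[|[|[|i]]] Hi]; rewrite /e /warped_entry /= -/k yk.
  - by rewrite lt_eqF.
  - by rewrite gt_eqF.
  - by rewrite expf_neq0.
  rewrite !mulf_neq0 ?expf_neq0 //.
  rewrite gt_eqF // big_nat_cond; apply: prodr_gt0 => j /andP[/andP[j3 ji] _].
  apply: sqr_pos; apply: sj; rewrite inordK ?j3 /=; lia.
have enz : forall i, e p i != 0.
  apply: goodP => //; first exact: p_chart.1.
  by move=> j jr; have := p_chart.2 j jr; rewrite inord_val.
have near_good : forall Z : 'rV[R]_n.+3, Z 0 k = 0 ->
    \forall h \near (0:R), forall i, e (h *: Z + p) i != 0.
  move=> Z Zk.
  have cs := cont_s _ _ hs.
  have H1 := near_neq0_affine _ _ (Z 0 (inord 2)) _ cs p_chart.1.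
  have H2 : \forall h \near (0:R), forall j : 'I_n.+3,
      (3 <= j < n.+2)%N -> sin (h * Z 0 j + p 0 j) != 0.
    apply: (@filter_forall R 'I_n.+3 _ (nbhs (0:R)) _) => j.
    case jr: (3 <= j < n.+2)%N; last by apply: nearW.
    have := near_neq0_affine _ _ (Z 0 j) _ (@continuous_sin R) (p_chart.2 j jr).
    rewrite inord_val; apply: filterS => h hj _; exact: hj.
  apply: filterS2 H1 H2 => h h1 h2.
  apply: goodP; first by rewrite yE Zk mulr0 add0r.
    by rewrite yE.
  by move=> j jr; rewrite yE; apply: h2.
have Vform : forall y, (forall i, e y i != 0) -> level_normal G k y =
    (Num.sqrt (e y k)^-1)^-1 *: \row_mu (if mu == k then (e y k)^-1 else 0).
  move=> y ey; rewrite /level_normal.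
  have -> : G y = \matrix_(i, j) (if i == j then e y i else 0).
    by apply/matrixP => i j; rewrite GE ?mxE.
  rewrite invmx_diagE // mxE eqxx; congr (_ *: _).
  by apply/rowP => mu; rewrite !mxE; case: eqP => [->|].
have dV : forall Z : 'rV[R]_n.+3, Z 0 k = 0 -> derive (level_normal G k) p Z = 0.
  move=> Z Zk; apply: derive_near_const.
  apply: filterS (near_good Z Zk) => h hg.
  by rewrite !Vform // !ekE yE Zk mulr0 add0r.
pose m1 := (Num.sqrt (e p k)^-1)^-1 * (e p k)^-1.
have Vp0 : forall la, level_normal G k p 0 la = if la == k then m1 else 0.
  by move=> la; rewrite Vform // !mxE; case: eqP; rewrite ?mulr0.
have ginvE : invmx (G p) = \matrix_(i, j) (if i == j then (e p i)^-1 else 0).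
  have -> : G p = \matrix_(i, j) (if i == j then e p i else 0).
    by apply/matrixP => i j; rewrite GE ?mxE.
  by rewrite invmx_diagE.
have chrE : forall mu nu la, christoffel G p mu nu la = 2^-1 * ((e p mu)^-1 *
    (dmetric G nu p mu la + dmetric G la p mu nu - dmetric G mu p nu la)).
  move=> mu nu la; rewrite /christoffel ginvE; congr (_ * _).
  rewrite (eq_bigr (fun sg => if mu == sg then (e p mu)^-1 *
    (dmetric G nu p mu la + dmetric G la p mu nu - dmetric G mu p nu la) else 0)).
    by rewrite sum_if.
  by move=> sg _; rewrite mxE; case: eqP => [<-|]; rewrite ?mul0r.
pose del nu := derive (fun y => e y nu) p (coord_vec k).
have D1 : forall nu sg, nu != k -> dmetric G nu p sg k = 0.
  move=> nu sg nuk; rewrite /dmetric; apply: derive_const_line => h.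
  rewrite !GE; case: eqP => [->|//]; rewrite !ekE yE cvE.
  by rewrite eq_sym (negbTE nuk) mulr0 add0r.
have D2 : forall nu sg, nu != k -> dmetric G sg p nu k = 0.
  move=> nu sg nuk; rewrite /dmetric; apply: derive_const_line => h.
  by rewrite !GE (negbTE nuk).
have D3 : forall sg nu, dmetric G k p sg nu = if sg == nu then del nu else 0.
  move=> sg nu; case: eqP => [->|/eqP sn].
    rewrite /dmetric /del; congr derive; apply: funext => y; by rewrite GE eqxx.
  rewrite /dmetric; apply: derive_const_line => h.
  by rewrite !GE (negbTE sn).
have D4 : forall i : 'I_n.+3, (2 <= i)%N -> del i = 2 * rp * (e p i / rp ^+ 2).
  move=> i i2; rewrite /del; apply: derive_sq_line => h.
  have yk : (h *: coord_vec k + p) 0 k = h + rp by rewrite yE cvE eqxx mulr1 p_on_S.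
  have [i2'|i3] : (i : nat) = 2%N \/ (3 <= i)%N by lia.
    rewrite !e2E // yk p_on_S divff ?mulr1 // expf_neq0 //.
  rewrite !e3E // yk p_on_S yE cvE.
  have -> : (inord 2 == k) = false by rewrite -val_eqE /= !inordK.
  rewrite mulr0 add0r.
  rewrite (@eq_big_nat _ _ _ 3 i _ (fun j => sin (p 0 (inord j)) ^+ 2)); last first.
    move=> j /andP[j3 ji]; rewrite yE cvE.
    have -> : (inord j == k) = false.
      rewrite -val_eqE /= kE inordK; first by lia.
      have := ltn_ord i; lia.
    by rewrite mulr0 add0r.
  by field.
have covE : forall Z : 'rV[R]_n.+3, Z 0 k = 0 -> forall mu,
    covD G (level_normal G k) p Z 0 mu = 2^-1 * (e p mu)^-1 * del mu * Z 0 mu * m1.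
  move=> Z Zk mu; rewrite /covD dV // !mxE add0r.
  rewrite (eq_bigr (fun nu => if mu == nu then
     2^-1 * (e p mu)^-1 * del mu * Z 0 mu * m1 else 0)) ?sum_if //.
  move=> nu _; rewrite (bigD1 k) //= big1 ?addr0; last first.
    by move=> la /negbTE lak; rewrite Vp0 lak mulr0.
  rewrite Vp0 eqxx.
  case: (eqVneq nu k) => [->|nuk].
    by rewrite Zk mulr0 mul0r; case: eqP => [->|]; rewrite ?Zk ?mulr0 ?mul0r.
  rewrite chrE D1 // D2 // D3; case: eqP => [<-|_]; ring.
have gprodE : forall U W, gprod G p U W = \sum_i U 0 i * e p i * W 0 i.
  move=> U W; rewrite /gprod; apply: eq_bigr => i _.
  rewrite (eq_bigr (fun j => if i == j then U 0 i * e p i * W 0 i else 0)) ?sum_if //.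
  by move=> j _; rewrite GE; case: eqP => [<-|]; rewrite ?mulr0 ?mul0r.
pose c i := 2^-1 * del i * m1.
have sffE : forall Z W : 'rV[R]_n.+3, Z 0 k = 0 ->
    sff G k p Z W = \sum_i c i * Z 0 i * W 0 i.
  move=> Z W Zk; rewrite /sff gprodE; apply: eq_bigr => i _.
  rewrite covE //; have ei := enz i; rewrite /c; by field.
have meanE : mean_curv G k p =
    (n.+2%:R)^-1 * \sum_(a < n.+2) (e p (lift k a))^-1 * c (lift k a).
  rewrite /mean_curv; congr (_ * _).
  have M1 : \matrix_(a, b) G p (lift k a) (lift k b) =
      \matrix_(a, b) (if a == b then e p (lift k a) else 0 : R).
    by apply/matrixP => a b; rewrite !mxE (inj_eq (@lift_inj _ k)).
  have M2 : \matrix_(a, b) sff G k p (coord_vec (lift k a)) (coord_vec (lift k b)) =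
      \matrix_(a, b) (if a == b then c (lift k a) else 0 : R).
    apply/matrixP => a b; rewrite !mxE sffE; last first.
      by rewrite cvE (negbTE (neq_lift _ _)).
    rewrite (eq_bigr (fun i => if lift k a == i then
        (if a == b then c (lift k a) else 0) else 0)) ?sum_if //.
    move=> i _; rewrite !cvE; have [<-|ni] := eqVneq (lift k a) i.
      rewrite mulr1 (inj_eq (@lift_inj _ k)).
      by case: (a == b); rewrite ?mulr1 ?mulr0.
    by rewrite mulr0 mul0r.
  rewrite M1 M2 invmx_diagE; last by move=> a; exact: enz.
  rewrite /mxtrace; apply: eq_bigr => a _; rewrite mxE.
  rewrite (eq_bigr (fun b => if a == b then
     (e p (lift k a))^-1 * c (lift k a) else 0)) ?sum_if //.
  by move=> b _; rewrite !mxE; case: eqP => [<-|]; rewrite ?eqxx ?mul0r.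
pose kappa := m1 / rp.
have cE : forall i : 'I_n.+3, (2 <= i)%N -> c i = kappa * e p i.
  by move=> i i2; rewrite /c D4 // /kappa; field.
have sumE : \sum_(a < n.+2) (e p (lift k a))^-1 * c (lift k a) =
    (e p ord0)^-1 * c ord0 + kappa *+ n.+1.
  rewrite big_ord_recl; congr (_ + _).
    by have -> : lift k ord0 = ord0 by apply/val_inj; rewrite /= /bump kE.
  rewrite (eq_bigr (fun _ => kappa)) ?sumr_const ?card_ord // => a _.
  rewrite cE; last by rewrite /= /bump kE /=; lia.
  by rewrite mulrCA mulVf ?mulr1.
pose A0 := (e p ord0)^-1 * c ord0.
pose Dm := (kappa - A0) / n.+2%:R.
pose w (i : 'I_n.+3) := if i == ord0 then - (n.+1%:R * e p ord0)
  else if i == k then 1 else e p i.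
pose Q (Z : 'rV[R]_n.+3) := \sum_i w i * Z 0 i ^+ 2.
have n2 : (n.+2%:R : R) != 0 by rewrite pnatr_eq0.
have sigE : forall Z : 'rV[R]_n.+3, Z 0 k = 0 ->
    sff G k p Z Z - mean_curv G k p * gprod G p Z Z = Dm * Q Z.
  move=> Z Zk; rewrite sffE // meanE sumE gprodE /Q !mulr_sumr -sumrB.
  apply: eq_bigr => i _; rewrite /w.
  case: (eqVneq i ord0) => [->|i0].
    have e0n := enz ord0; rewrite /Dm /A0 -mulr_natr; field.
    by rewrite e0n andbT -natrD pnatr_eq0.
  case: (eqVneq i k) => [->|ik].
    rewrite Zk; ring.
  have i2 : (2 <= i)%N.
    move: i0 ik; rewrite -!val_eqE /= kE; lia.
  have ei := enz i.
  rewrite cE // /Dm /A0 -mulr_natr; field.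
  by rewrite (enz ord0) andbT -natrD pnatr_eq0.
have wpos : forall i, 0 < w i.
  move=> i; rewrite /w; case: ifP => [_|/negbT i0].
    by rewrite oppr_gt0 pmulr_rlt0 ?ltr0n // e0E.
  case: ifP => [_|/negbT ik] //.
  have i2 : (2 <= i)%N.
    move: i0 ik; rewrite -!val_eqE /= kE; lia.
  rewrite lt0r enz /=.
  have [i2'|i3] : (i : nat) = 2%N \/ (3 <= i)%N by lia.
    by rewrite e2E // sqr_ge0.
  rewrite e3E //; apply: mulr_ge0; first by apply: mulr_ge0; exact: sqr_ge0.
  by apply: prodr_ge0 => j _; exact: sqr_ge0.
have Qpos : forall Z : 'rV[R]_n.+3, Z != 0 -> 0 < Q Z.
  move=> Z Z0; rewrite lt0r.
  have Qge : 0 <= Q Z by apply: sumr_ge0 => i _; rewrite mulr_ge0 ?sqr_ge0 ?ltW.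
  rewrite Qge andbT; apply/negP => /eqP QZ.
  have H := psumr_eq0P (fun j _ => mulr_ge0 (ltW (wpos j)) (sqr_ge0 (Z 0 j))) QZ.
  move/negP: Z0; apply; apply/eqP/rowP => i; rewrite mxE.
  have /eqP := H i isT.
  by rewrite mulf_eq0 (gt_eqF (wpos i)) /= sqrf_eq0 => /eqP.
have QX := Qpos X X0; have QY := Qpos Y Y0.
rewrite !sigE //; split.
- split => /eqP; rewrite mulf_eq0 ?(gt_eqF QX) ?(gt_eqF QY) orbF => /eqP ->;
    by rewrite mul0r.
- by rewrite !pmulr_lgt0.
- by rewrite !pmulr_llt0.
Qed.
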